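(* Let $\sigma\in\Omega_L$ satisfy $N(\sigma)\le n_0(n_0+1)+1$, and let $\sigma^o$ be the configuration obtained from $\sigma$ by replacing every spin equal to $+1$ by $0$, i.e. $\sigma^o(x)=\min\{\sigma(x),0\}$. Then $\mathbb H(\sigma^o)\le\mathbb H(\sigma)$.
   Context: Fix $h\in(0,1)$ with $2/h\notin\mathbb Z$, $n_0=\lfloor 2/h\rfloor$. $\Lambda_L$ is the two-dimensional discrete torus of side $L$, with $L\ge n_0(n_0+1)+2$, and $\Omega_L=\{-1,0,1\}^{\Lambda_L}$. Hamiltonian $\mathbb H(\sigma)=\sum(\sigma(y)-\sigma(x))^2-h\sum_{x\in\Lambda_L}\sigma(x)$, the first sum over unordered nearest-neighbour pairs $\{x,y\}$. $N(\sigma)=\#\{x\in\Lambda_L:\sigma(x)\ne-1\}$. *)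

(* Defs.v *)
From HB Require Import structures.
From mathcomp Require Import all_boot all_order all_algebra.
Set Implicit Arguments. Unset Strict Implicit. Unset Printing Implicit Defensive.
Import Order.TTheory GRing.Theory Num.Theory.
Local Open Scope ring_scope.

Definition site (L : nat) : finType := ('I_L * 'I_L)%type.

(* Nearest-neighbour relation on the torus (coordinates taken mod L). *)
Definition nn (L : nat) (x y : site L) : bool :=
  ((x.1 == y.1) && ((y.2 == ordS x.2) || (x.2 == ordS y.2))) ||
  ((x.2 == y.2) && ((y.1 == ordS x.1) || (x.1 == ordS y.1))).

Definition is_config (L : nat) (s : site L -> int) : Prop :=
  forall x, s x \in [:: (-1)%R; 0%R; 1%R].

(* Hamiltonian: sum over unordered nearest-neighbour pairs {x,y} of
   (s y - s x)^2, written as half the sum over ordered pairs, minus h sum_x s x. *)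
Definition Ham (R : numFieldType) (h : R) (L : nat) (s : site L -> int) : R :=
  (\sum_(x : site L) \sum_(y : site L | nn x y) ((s y - s x) ^+ 2)%:~R) / 2%:R
  - h * \sum_(x : site L) (s x)%:~R.

Definition Nplus (L : nat) (s : site L -> int) : nat :=
  #|[pred x : site L | s x != (-1)%R]|.

Definition zero_plus (L : nat) (s : site L -> int) : site L -> int :=
  fun x => Num.min (s x) 0.

(* Main.v *)
Require Import Defs.
From HB Require Import structures.
From mathcomp Require Import all_boot all_order all_algebra.
From mathcomp Require Import zify ring lra.
Import Order.TTheory GRing.Theory Num.Theory.


Lemma iter_ordS L (j : 'I_L) m : val (iter m (@ordS L) j) = (j + m) %% L.
Proof.
elim: m => [|m IH] /=; first by rewrite addn0 modn_small.
by rewrite IH -addn1 modnDml addn1 addnS.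
Qed.

Lemma cyc_closure L (q : pred 'I_L) j0 : q j0 -> (forall j, q j -> q (ordS j)) -> forall a, q a.
Proof.
move=> q0 qS a.
have H : forall m, q (iter m (@ordS L) j0) by elim=> [|m IH] //=; apply: qS.
suff -> : a = iter (a + (L - j0)) (@ordS L) j0 by [].
apply: val_inj; rewrite iter_ordS /=.
have -> : j0 + (a + (L - j0)) = a + L by have := ltn_ord j0; lia.
by rewrite modnDr modn_small.
Qed.

Lemma ordS_neq L (j : 'I_L) : 2 <= L -> ordS j != j.
Proof.
move=> L2; apply/negP=> /eqP/(congr1 (@nat_of_ord L)) /=.
have := ltn_ord j; case: (ltngtP j.+1 L) => // [lt _|eq _].
  by rewrite modn_small //; lia.
by rewrite eq modnn => j0; move: eq; rewrite -j0; lia.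
Qed.

Lemma ordS2_neq L (j : 'I_L) : 3 <= L -> ordS j != ord_pred j.
Proof.
move=> L3; apply/negP=> /eqP/(congr1 (@ordS L)); rewrite ord_predK.
move/(congr1 (@nat_of_ord L)); rewrite (@iter_ordS _ j 2).
have := ltn_ord j; case: (ltngtP (j+2) L) => [lt _|gt jl|eq _].
- by rewrite modn_small //; lia.
  have -> : j + 2 = (j + 2 - L) + L by lia.
  rewrite modnDr modn_small; lia.
- by rewrite eq modnn; lia.
Qed.

Local Open Scope ring_scope.
Lemma term_ineq (a b : int) : a \in [:: (-1)%R; 0%R; 1%R] -> b \in [:: (-1)%R; 0%R; 1%R] ->
  ((((a == 1) && (b != 1)) + ((a != 1) && (b == 1)))%N%:Z <=
   (b - a) ^+ 2 - (Num.min b 0 - Num.min a 0) ^+ 2).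
Proof.
by rewrite !inE => /or3P [] /eqP-> /or3P [] /eqP->.
Qed.
Local Close Scope ring_scope.

Lemma line_bound L (q : pred 'I_L) : (exists a, q a) -> (exists b, ~~ q b) ->
  2 <= \sum_j ((q j && ~~ q (ordS j)) + (~~ q j && q (ordS j))).
Proof.
move=> [a qa] [b qb].
have [/existsP [j1 /andP [q1 n1]]| /existsPn H1] := boolP [exists j, q j && ~~ q (ordS j)]; last first.
  suff: q b by rewrite (negbTE qb).
  apply: (@cyc_closure L q a qa) => j qj.
  by have := H1 j; rewrite qj /= negbK.
have [/existsP [j2 /andP [q2 n2]]| /existsPn H2] := boolP [exists j, ~~ q j && q (ordS j)]; last first.
  suff: (predC q) a by rewrite /= qa.
  apply: (@cyc_closure L (predC q) b qb) => j qj.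
  by have := H2 j; move: qj => /= ->.

have ne : j2 != j1 by apply/eqP=> e; move: q2; rewrite e q1.
rewrite (bigD1 j1) //= (bigD1 j2) //= q1 n1 q2 n2 /=.
lia.
Qed.

Set Implicit Arguments. Unset Strict Implicit.
Definition dlt L (p : pred (site L)) (x y : site L) : nat :=
  (p x && ~~ p y) + (~~ p x && p y).

Arguments dlt : simpl never.
Lemma dltC L p (x y : site L) : dlt p x y = dlt p y x.
Proof. by rewrite /dlt; case: (p x); case: (p y). Qed.

Lemma ord_pred_neq L (j : 'I_L) : 2 <= L -> ord_pred j != j.
Proof.
move=> L2; apply/negP => /eqP e.
by have := @ordS_neq _ (ord_pred j) L2; rewrite ord_predK e eqxx.
Qed.

Lemma sum_lower (I : finType) (A : {set I}) (g : I -> nat) :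
  (forall i, i \in A -> 2 <= g i) -> 2 * #|A| <= \sum_i g i.
Proof.
move=> H; rewrite -sum1_card big_distrr /= [X in _ <= X](bigID (mem A)) /=.
apply: leq_trans (leq_addr _ _); apply: leq_sum => i iA; rewrite muln1; exact: H.
Qed.

Lemma local_bound L (p : pred (site L)) (x : site L) : 3 <= L ->
  dlt p x (x.1, ordS x.2) + dlt p x (x.1, ord_pred x.2) + dlt p x (ordS x.1, x.2)
  + dlt p x (ord_pred x.1, x.2) <= \sum_(y | nn x y) dlt p x y.
Proof.
move=> L3; have L2 : 2 <= L by lia.
case: x => a b /=.
have n1 : ordS b != ord_pred b := @ordS2_neq _ b L3.
have n2 : ordS a != ord_pred a := @ordS2_neq _ a L3.
have n3 := @ordS_neq _ a L2; have n4 := ord_pred_neq a L2.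
rewrite (bigD1 (a, ordS b)); last by rewrite /nn /= !eqxx.
rewrite (bigD1 (a, ord_pred b)); last first.
  by rewrite /nn /= !eqxx ord_predK eqxx orbT /= xpair_eqE eqxx /= eq_sym.
rewrite (bigD1 (ordS a, b)); last first.
  by rewrite /nn /= !eqxx orbT /= !xpair_eqE (negbTE n3).
rewrite (bigD1 (ord_pred a, b)); last first.
  rewrite /nn /= !eqxx ord_predK eqxx !orbT /= !xpair_eqE (negbTE n4) /= eq_sym (negbTE n2) //=.
have E : forall (u v w z t : nat), u + v + w + z <= u + (v + (w + (z + t))) by move=> *; lia.
exact: E.
Qed.

Lemma perim L (p : pred (site L)) : 3 <= L ->
  (forall i, exists j, ~~ p (i,j)) -> (forall j, exists i, ~~ p (i,j)) ->
  4 * (#|[set i | [exists j, p (i,j)]]| + #|[set j | [exists i, p (i,j)]]|)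
  <= \sum_x \sum_(y | nn x y) dlt p x y.
Proof.
move=> L3 Hr Hc.
apply: (leq_trans _ (@leq_sum _ (index_enum (site L)) (fun _ => true) _ _ (fun x _ => local_bound p x L3))).
rewrite big_split big_split big_split /=.
have Hl : \sum_(x : site L) dlt p x (x.1, ord_pred x.2) = \sum_(x : site L) dlt p x (x.1, ordS x.2).
  rewrite (@reindex_inj _ _ _ _ (fun x : site L => (x.1, ordS x.2))) /=; last first.
    move=> [a b] [c d] /= E; have e1 := congr1 fst E; have e2 := congr1 snd E.
    by rewrite /= in e1 e2; rewrite e1 (ordS_inj e2).
  by apply: eq_bigr => [[a b]] _ /=; rewrite ordSK dltC.
have Hd : \sum_(x : site L) dlt p x (ord_pred x.1, x.2) = \sum_(x : site L) dlt p x (ordS x.1, x.2).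
  rewrite (@reindex_inj _ _ _ _ (fun x : site L => (ordS x.1, x.2))) /=; last first.
    move=> [a b] [c d] /= E; have e1 := congr1 fst E; have e2 := congr1 snd E.
    by rewrite /= in e1 e2; rewrite e2 (ordS_inj e1).
  by apply: eq_bigr => [[a b]] _ /=; rewrite ordSK dltC.
have HR : 2 * #|[set i | [exists j, p (i,j)]]| <= \sum_(x : site L) dlt p x (x.1, ordS x.2).
  have -> : \sum_(x : site L) dlt p x (x.1, ordS x.2) = \sum_i \sum_j dlt p (i,j) (i, ordS j).
    by rewrite pair_bigA; apply: eq_bigr => [[i j]].
  apply: sum_lower => i; rewrite inE => /existsP [j pj].
  exact: (@line_bound L (fun j => p (i,j)) (ex_intro _ j pj) (Hr i)).
have HC : 2 * #|[set j | [exists i, p (i,j)]]| <= \sum_(x : site L) dlt p x (ordS x.1, x.2).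
  have -> : \sum_(x : site L) dlt p x (ordS x.1, x.2) = \sum_j \sum_i dlt p (i,j) (ordS i, j).
    by rewrite exchange_big pair_bigA; apply: eq_bigr => [[i j]].
  apply: sum_lower => j; rewrite inE => /existsP [i pi].
  exact: (@line_bound L (fun i => p (i,j)) (ex_intro _ i pi) (Hc j)).
have E : forall a b c d r k, 2 * r <= a -> b = a -> 2 * k <= c -> d = c -> 4 * (r + k) <= a + b + c + d by move=> *; lia.
exact: E HR Hl HC Hd.
Qed.

Local Open Scope ring_scope.

Lemma real_final (R : realFieldType) (h nr k r c : R) : 0 < h -> h < 1 -> 1 <= nr ->
  h * nr <= 2 -> 0 <= k -> k <= nr * (nr + 1) + 1 -> k <= r * c -> 0 <= r -> 0 <= c ->
  h * k <= 2 * (r + c).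
Proof.
move=> h0 h1 n1 hn k0 kN krc r0 c0.
have hn0 : 0 <= h * nr by nra.
have a1 : (h * nr) * (h * nr) <= 4 by nra.
have a2 : h * (h * nr) <= 2 by nra.
have a0 : h * h <= 1 by nra.
have a3 : (h * h) * (nr * (nr + 1) + 1) <= 7 by nra.
have a4 : (h * k) * (h * k) <= 7 * k.
  have e : 0 <= (nr * (nr + 1) + 1 - k) * (h * h * k).
    by apply: mulr_ge0; [rewrite subr_ge0 | apply: mulr_ge0; nra].
  have e2 : 0 <= (7 - (h * h) * (nr * (nr + 1) + 1)) * k by apply: mulr_ge0; lra.
  nra.
have a5 : (h * k) * (h * k) <= 4 * ((r + c) * (r + c)).
  have : 7 * k <= 7 * (r * c) by lra.
  have : 0 <= (r - c) * (r - c) by rewrite -expr2 sqr_ge0.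
  have : 0 <= r * c by apply: mulr_ge0.
  nra.
have rc0 : 0 <= 2 * (r + c) by lra.
have hk0 : 0 <= h * k by nra.
nra.
Qed.

Unset Implicit Arguments.
Theorem mainTheorem20 (R : archiRealFieldType) (h : R) (L : nat)
  (s : site L -> int) :
  0 < h -> h < 1 -> ~~ (2 / h \is a Num.int) ->
  (Num.floor (2 / h) * (Num.floor (2 / h) + 1) + 2 <= (L : int)) ->
  is_config s ->
  ((Nplus s : int) <= Num.floor (2 / h) * (Num.floor (2 / h) + 1) + 1) ->
  Ham h (zero_plus s) <= Ham h s.
Proof.
move=> h0 h1 _ HL Hs HN.
set n0 := Num.floor (2 / h) in HL HN.
pose p : pred (site L) := fun x => s x == 1.
pose k := #|[set x | p x]|.
have kN : (k : int) <= Nplus s.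
  rewrite lez_nat /Nplus; apply: subset_leq_card; apply/subsetP => x.
  by rewrite !inE => /eqP e; rewrite /= e.
have n02 : 2 <= n0.
  rewrite /n0 floor_ge_int ler_pdivlMr //; lra.
have kL : (k < L)%N by rewrite -ltz_nat; lia.
have L3 : (3 <= L)%N by rewrite -lez_nat; nia.
have Hr : forall i, exists j, ~~ p (i,j).
  move=> i; case: (boolP [forall j, p (i,j)]) => [/forallP H | /forallPn [j Hj]]; last by exists j.
  have : (L <= k)%N.
    have := @card_imset _ _ (fun j : 'I_L => (i, j)) 'I_L; rewrite card_ord => <-; last by move=> a b [].
    by apply: subset_leq_card; apply/subsetP => x /imsetP [j _ ->]; rewrite inE; exact: H.
  by rewrite leqNgt kL.
have Hc : forall j, exists i, ~~ p (i,j).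
  move=> j; case: (boolP [forall i, p (i,j)]) => [/forallP H | /forallPn [i Hi]]; last by exists i.
  have : (L <= k)%N.
    have := @card_imset _ _ (fun i : 'I_L => (i, j)) 'I_L; rewrite card_ord => <-; last by move=> a b [].
    by apply: subset_leq_card; apply/subsetP => x /imsetP [i _ ->]; rewrite inE; exact: H.
  by rewrite leqNgt kL.
have HD := @perim L p L3 Hr Hc.
have Hk : (k <= #|[set i | [exists j, p (i,j)]]| * #|[set j | [exists i, p (i,j)]]|)%N.
  rewrite -cardsX; apply: subset_leq_card; apply/subsetP => -[i j]; rewrite !inE /= => pij.
  by apply/andP; split; apply/existsP; [exists j | exists i].
move: HD Hk; set r := #|[set i | _]|; set c := #|[set j | _]|.
set D := (\sum_x _)%N => HD Hk.
rewrite /Ham.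
have HA : (D%:R : R) <= \sum_x \sum_(y | nn x y) ((s y - s x) ^+ 2)%:~R
      - \sum_x \sum_(y | nn x y) ((zero_plus s y - zero_plus s x) ^+ 2)%:~R.
  rewrite -sumrB /D natr_sum; apply: ler_sum => x _; rewrite -sumrB natr_sum; apply: ler_sum => y _.
  rewrite -intrB /zero_plus; have := @term_ineq _ _ (Hs x) (Hs y); rewrite -(ler_int R).
  by [].
have HS : \sum_x (s x)%:~R - \sum_x (zero_plus s x)%:~R = (k%:R : R).
  rewrite -sumrB /k -sum1_card natr_sum [RHS]big_mkcond /=; apply: eq_bigr => x _.
  rewrite inE /p /zero_plus -intrB.
  by move: (Hs x); rewrite !inE => /or3P [] /eqP ->.
set nr : R := n0%:~R.
have hn : h * nr <= 2.
  have := floor_le (2 / h); rewrite -/n0 -/nr ler_pdivlMr // => e; lra.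
have n1 : 1 <= nr.
  have : ((1:int)%:~R : R) <= n0%:~R by rewrite ler_int; lia.
  by [].
have kNr : (k%:R : R) <= nr * (nr + 1) + 1.
  have : (((k:int))%:~R : R) <= (n0 * (n0 + 1) + 1)%:~R by rewrite ler_int; lia.
  rewrite intrD intrM intrD; exact.
have krc : (k%:R : R) <= r%:R * c%:R by rewrite -natrM ler_nat.
have F := real_final h0 h1 n1 hn (ler0n _ k) kNr krc (ler0n _ _) (ler0n _ _).
have HDr : ((4 * (r + c))%:R : R) <= D%:R by rewrite ler_nat.
rewrite natrM natrD in HDr.
move: HA HS; set A := \sum_x \sum_(y | _) ((s y - s x) ^+ 2)%:~R.
set A' := \sum_x \sum_(y | _) _.
set S := \sum_x (s x)%:~R; set S' := \sum_x _ => HA HS.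
have -> : S = S' + k%:R by rewrite -HS; ring.
rewrite mulrDr.
lra.
Qed.
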